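(* Let $G$ be a Hausdorff topological group, $Y$ a topological space, $\theta$ a nice partial action of $G$ on $Y$, and $X$ a compact space, with $\hat\theta$ the induced partial action on $C(X,Y)$. Then the enveloping space $C(X,Y)_G$ is homeomorphic to an open subset of $C(X,Y_G)$ (compact-open topology), where $Y_G$ is the enveloping space of $\theta$.
   Context: A topological partial action of $G$ on $Y$ is a family of homeomorphisms $\theta_g\colon Y_{g^{-1}}\to Y_g$ between open subsets with $Y_e=Y$, $\theta_e=\mathrm{id}_Y$, $\theta_{g^{-1}}=\theta_g^{-1}$, $\theta_g\circ\theta_h$ a restriction of $\theta_{gh}$; it is nice if $G*Y=\{(g,y): y\in Y_{g^{-1}}\}$ is open in $G\times Y$ and $(g,y)\mapsto\theta_g(y)$ is continuous on $G*Y$. $C(X,Y)$ has the compact-open topology; $\hat\theta$ has $C(X,Y)_g=\{f: f(X)\subset Y_g\}$ and $\hat\theta_g(f)=\theta_g\circ f$. For a topological partial action on $W$, the enveloping space is $W_G=(G\times W)/R$ with the quotient topology, where $(g,x)R(h,y)$ iff $x\in W_{g^{-1}h}$ and $\theta_{h^{-1}g}(x)=y$. *)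

(* Defs.v *)
From HB Require Import structures.
From mathcomp Require Import all_boot all_order all_algebra generic_quotient.
From mathcomp Require Import all_classical all_reals all_analysis.
From Stdlib Require Import Relations.Relation_Operators.

Set Implicit Arguments.
Unset Strict Implicit.
Unset Printing Implicit Defensive.

Local Open Scope classical_set_scope.

Definition topological_group (G : topologicalType)
    (mul : G -> G -> G) (inv : G -> G) (one : G) : Prop :=
  [/\ (forall a b c, mul a (mul b c) = mul (mul a b) c),
      (forall a, mul one a = a /\ mul a one = a),
      (forall a, mul (inv a) a = one /\ mul a (inv a) = one),
      continuous (fun p : G * G => mul p.1 p.2) &
      continuous inv].

(* by the family of domains  D g = Y_g  and maps  th g : Y -> Y  whose *)
(* restriction to Y_{g^-1} is theta_g : Y_{g^-1} -> Y_g (the values   *)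
(* of  th g  outside Y_{g^-1} are irrelevant).                         *)

Definition topological_partial_action (G Y : topologicalType)
    (mul : G -> G -> G) (inv : G -> G) (one : G)
    (D : G -> set Y) (th : G -> Y -> Y) : Prop :=
  (forall g, open (D g)) /\
  [/\
      (forall g y, D (inv g) y -> D g (th g y)),
      (forall g, {within D (inv g), continuous (th g)}),
      (* theta_{g^-1} = theta_g^-1  (so each theta_g is a homeomorphism
         Y_{g^-1} -> Y_g, with inverse theta_{g^-1}) *)
      (forall g y, D (inv g) y -> th (inv g) (th g y) = y),
      D one = setT /\ (forall y, th one y = y) &
      (forall g h y, D (inv h) y -> D (inv g) (th h y) ->
         D (inv (mul g h)) y /\ th (mul g h) y = th g (th h y))].

Definition nice_partial_action (G Y : topologicalType)
    (mul : G -> G -> G) (inv : G -> G) (one : G)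
    (D : G -> set Y) (th : G -> Y -> Y) : Prop :=
  [/\ topological_partial_action mul inv one D th,
      open [set p : G * Y | D (inv p.1) p.2] &
      {within [set p : G * Y | D (inv p.1) p.2],
         continuous (fun p : G * Y => th p.1 p.2)}].

(* The action is passed through its graph  act k x y  <->             *)
(* "theta_k(x) = y", which allows treating the induced action on       *)
(* C(X,Y) without building hat-theta as a function.                   *)

Definition env_R (G Z : Type) (mul : G -> G -> G) (inv : G -> G)
    (D : G -> set Z) (act : G -> Z -> Z -> Prop) (p q : G * Z) : Prop :=
  D (mul (inv p.1) q.1) p.2 /\ act (mul (inv q.1) p.1) p.2 q.2.

(* Its equivalence closure (equal to R itself for a partial action),
   as a boolean equivalence relation usable for quotients. *)
Definition env_eq (T : Type) (R : T -> T -> Prop) : rel T :=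
  fun p q => `[< clos_refl_sym_trans T R p q >].

Lemma env_eq_is_equiv (T : Type) (R : T -> T -> Prop) :
  equiv_class_of (env_eq R).
Proof.
split.
- by move=> x; apply/asboolP; apply: rst_refl.
- move=> x y; apply/idP/idP => /asboolP H; apply/asboolP; exact: rst_sym.
- move=> y x z /asboolP H1 /asboolP H2; apply/asboolP; exact: rst_trans H1 H2.
Qed.

Definition env_equiv (T : Type) (R : T -> T -> Prop) : equiv_rel T :=
  EquivRelPack (env_eq_is_equiv R).

Definition enveloping_space (G Z : topologicalType)
    (mul : G -> G -> G) (inv : G -> G)
    (D : G -> set Z) (act : G -> Z -> Z -> Prop) : topologicalType :=
  quotient_topology {eq_quot (env_equiv (env_R mul inv D act))}%qT.

Definition env_space (G Y : topologicalType)
    (mul : G -> G -> G) (inv : G -> G)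
    (D : G -> set Y) (th : G -> Y -> Y) : topologicalType :=
  enveloping_space mul inv D (fun k y y' => th k y = y').

Definition Cmap (X Y : topologicalType) : topologicalType :=
  set_type [set f : {compact-open, X -> Y} | continuous (f : X -> Y)].

Definition Cfun (X Y : topologicalType) (f : Cmap X Y) : X -> Y :=
  set_val f.

Definition hat_dom {G Y : topologicalType} (X : topologicalType) (D : G -> set Y) (g : G) :
    set (Cmap X Y) :=
  [set f | forall x, D g (Cfun f x)].

Definition hat_act {G Y : topologicalType} (X : topologicalType) (th : G -> Y -> Y) (g : G)
    (f f' : Cmap X Y) : Prop :=
  th g \o Cfun f = Cfun f'.

Arguments hat_dom {G Y} X D g.
Arguments hat_act {G Y} X th g f f'.

Definition hat_env_space {G Y : topologicalType} (X : topologicalType)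
    (mul : G -> G -> G) (inv : G -> G)
    (D : G -> set Y) (th : G -> Y -> Y) : topologicalType :=
  enveloping_space mul inv (hat_dom X D) (hat_act X th).

Arguments hat_env_space {G Y} X mul inv D th.

(* Main.v *)
Require Import Defs.
From HB Require Import structures.
From mathcomp Require Import all_boot all_order all_algebra generic_quotient.
From mathcomp Require Import all_classical all_reals all_analysis.
From Stdlib Require Import Relations.Relation_Operators.

Local Open Scope classical_set_scope.
Local Open Scope quotient_scope.
Set Implicit Arguments.
Unset Strict Implicit.
Lemma grp_inv_inv (G : topologicalType) (mul : G -> G -> G) inv one :
  topological_group mul inv one -> forall a, inv (inv a) = a.
Proof.
case=> A I V _ _ a.
by rewrite -[inv (inv a)](I _).2 -(V a).1 A (V (inv a)).1 (I _).1.
Qed.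

Lemma grp_inv_mul (G : topologicalType) (mul : G -> G -> G) inv one :
  topological_group mul inv one ->
  forall a b, inv (mul a b) = mul (inv b) (inv a).
Proof.
move=> hG; case: (hG) => A I V _ _ a b.
have h : mul (mul (inv b) (inv a)) (mul a b) = one.
  by rewrite A -(A _ (inv a)) (V a).1 (I _).2 (V b).1.
by rewrite -[LHS](I _).1 -h -A (V _).2 (I _).2.
Qed.
Definition Rb (G Y : topologicalType) (mul : G -> G -> G) (inv : G -> G)
  (D : G -> set Y) (th : G -> Y -> Y) :=
  env_R mul inv D (fun k y y' => th k y = y').

Lemma Rb_closure (G Y : topologicalType) (mul : G -> G -> G) inv one
    (D : G -> set Y) (th : G -> Y -> Y) :
  topological_group mul inv one ->
  topological_partial_action mul inv one D th ->
  forall p q, env_eq (Rb mul inv D th) p q -> Rb mul inv D th p q.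
Proof.
move=> hG [_ [a1 _ a3 [a4 a4'] a5]].
have [A I V _ _] := hG.
have ii := grp_inv_inv hG; have im := grp_inv_mul hG.
move=> p q /asboolP H; elim: H; clear p q.
- by [].
- move=> [g y]; rewrite /Rb /env_R /= (V g).1 a4; split => //.
- move=> [g y] [h z] _ [/= Dy <-]; rewrite /Rb /env_R /=.
  have Dy' : D (inv (mul (inv h) g)) y by rewrite im ii.
  split; first by have := a1 _ _ Dy'.
  by rewrite -[mul (inv g) h]ii im ii a3.
- move=> [g y] [h z] [k w] _ [/= Dy <-] _ [/= Dz <-]; rewrite /Rb /env_R /=.
  have Dy' : D (inv (mul (inv h) g)) y by rewrite im ii.
  have Dz' : D (inv (mul (inv k) h)) (th (mul (inv h) g) y) by rewrite im ii.
  have [H1 H2] := a5 _ _ _ Dy' Dz'.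
  have e : mul (mul (inv k) h) (mul (inv h) g) = mul (inv k) g.
    by rewrite A -(A _ h) (V h).2 (I _).2.
  rewrite e im ii in H1; split => //.
  by rewrite -H2 e.
Qed.

Lemma Rb_env_eq (T : Type) (R : T -> T -> Prop) p q : R p q -> env_eq R p q.
Proof. by move=> H; apply/asboolP; apply: rst_step. Qed.
Lemma pair_cst_cont (A B : topologicalType) (a : A) : continuous (fun b : B => (a, b)).
Proof. by move=> b; apply: cvg_pair; [exact: cvg_cst | exact: cvg_id]. Qed.

Lemma lmul_cont (G : topologicalType) (mul : G -> G -> G) inv one (a : G) :
  topological_group mul inv one -> continuous (mul a).
Proof.
case=> _ _ _ cm _ q.
have H := continuous_comp (@pair_cst_cont _ _ a q) (cm (a, q)).
exact: H.
Qed.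

Lemma lmul1_cont (G Y : topologicalType) (mul : G -> G -> G) inv one (a : G) :
  topological_group mul inv one -> continuous (fun p : G * Y => (mul a p.1, p.2)).
Proof.
move=> hG p; apply: cvg_pair.
- have H := continuous_comp (@cvg_fst _ _ (nbhs p.1) (nbhs p.2) _) (@lmul_cont _ _ _ _ a hG p.1).
  exact: H.
- exact: cvg_snd.
Qed.
Lemma pi_eqP (G Y : topologicalType) (mul : G -> G -> G) inv one
    (D : G -> set Y) (th : G -> Y -> Y) :
  topological_group mul inv one ->
  topological_partial_action mul inv one D th ->
  forall p q, \pi_(env_space mul inv D th) p = \pi_(env_space mul inv D th) q
    <-> Rb mul inv D th p q.
Proof.
move=> hG hP p q; split.
- move=> H; apply: (Rb_closure hG hP).
  by apply/(eqmodP (env_equiv (Rb mul inv D th))).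
- move=> H; apply/(eqmodP (env_equiv (Rb mul inv D th))).
  exact: Rb_env_eq.
Qed.

Lemma j_inj (G Y : topologicalType) (mul : G -> G -> G) inv one
    (D : G -> set Y) (th : G -> Y -> Y) :
  topological_group mul inv one ->
  topological_partial_action mul inv one D th ->
  forall g y y', \pi_(env_space mul inv D th) (g, y) = \pi_(env_space mul inv D th) (g, y')
    -> y = y'.
Proof.
move=> hG hP g y y' /(pi_eqP hG hP) [_ /=].
have [_ _ V _ _] := hG; have [_ [_ _ _ [_ a4'] _]] := hP.
by rewrite (V g).1 a4'.
Qed.

Lemma open_within_preimage (T U : topologicalType) (W : set T) (f : T -> U) (O : set U) :
  open W -> {within W, continuous f} -> open O -> open (W `&` f @^-1` O).
Proof.
move=> oW cf oO; rewrite (continuous_open_subspace _ oW) in cf.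
rewrite openE => q [Wq Oq]; apply: filterI.
- by apply: open_nbhs_nbhs; split.
- have := cf q; rewrite inE => /(_ Wq); apply.
  by apply: open_nbhs_nbhs; split.
Qed.

Lemma j_open (G Y : topologicalType) (mul : G -> G -> G) inv one
    (D : G -> set Y) (th : G -> Y -> Y) :
  topological_group mul inv one ->
  nice_partial_action mul inv one D th ->
  forall g0 (U : set Y), open U ->
  open ((fun y => \pi_(env_space mul inv D th) (g0, y)) @` U).
Proof.
move=> hG [hP oW cth] g0 U oU.
have ii := grp_inv_inv hG; have im := grp_inv_mul hG.
pose S' := [set q : G * Y | D (inv q.1) q.2] `&` (fun q : G * Y => th q.1 q.2) @^-1` U.
have oS' : open S' by apply: open_within_preimage.
suff HH : open (\pi_(env_space mul inv D th) @^-1`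
   ((fun y => \pi_(env_space mul inv D th) (g0, y)) @` U)) by exact: HH.
have -> : (\pi_(env_space mul inv D th) @^-1`
   ((fun y => \pi_(env_space mul inv D th) (g0, y)) @` U)) =
   (fun p : G * Y => (mul (inv g0) p.1, p.2)) @^-1` S'.
  rewrite eqEsubset; split => -[h y] /=.
  - case=> u Uu /esym /(pi_eqP hG hP) [/= H1 H2]; split => /=.
    + by rewrite im ii.
    + by rewrite H2.
  - case=> /= H1 H2; exists (th (mul (inv g0) h) y) => //.
    apply/esym/(pi_eqP hG hP); split => //=.
    by rewrite im ii in H1.
by move/continuousP: (@lmul1_cont _ Y _ _ _ (inv g0) hG); apply.
Qed.
Lemma tube (G Y X : topologicalType) (K : set X) (W : set (G * Y)) (g0 : G) (f0 : X -> Y) :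
  compact K -> open W -> continuous f0 -> (forall x, K x -> W (g0, f0 x)) ->
  exists V O, [/\ nbhs g0 V, open O, (forall x, K x -> O (f0 x)) &
                 (forall g y, V g -> O y -> W (g, y))].
Proof.
move=> cK oW cf0 KW.
pose P (V : set G) (x : X) := \forall y' \near f0 x, forall g, V g -> W (g, y').
have : \forall V \near powerset_filter_from (nbhs g0), K `<=` P V.
  apply: ((compact_near_coveringP K).1 cK _ _ P _) => x Kx.
  have : nbhs (g0, f0 x) W by apply: open_nbhs_nbhs; split => //; exact: KW.
  case=> -[V0 N0] /= [nV0 nN0] sub.
  exists (f0 @^-1` N0°, [set V | V `<=` V0]); first split.
  - by apply: cf0; exact: nbhs_interior.
  - exact: small_set_sub.
  case=> x' V /= [hx' hV].
  rewrite /P; apply: filterS hx' => y Ny g Vg.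
  by apply: sub; split => //; exact: hV.
case/near_powerset_filter_fromP.
  by move=> A B AB KB x Kx; apply: filterS (KB x Kx) => y H g Ag; apply: H; exact: AB.
move=> V nV KP.
exists V, [set y | forall g, V g -> W (g, y)]°; split.
- exact: nV.
- exact: open_interior.
- by move=> x Kx; have := KP x Kx.
- by move=> g y Vg /interior_subset; apply.
Qed.
Lemma Cfun_cont (X Y : topologicalType) (f : Cmap X Y) : continuous (Cfun f).
Proof. exact: (set_mem (proj2_sig f)). Qed.

Lemma Cfun_inj (X Y : topologicalType) (f g : Cmap X Y) : Cfun f = Cfun g -> f = g.
Proof. by move=> H; apply: val_inj. Qed.

Definition mkC (X Z : topologicalType) (F : X -> Z) (H : continuous F) : Cmap X Z :=
  @exist _ _ (F : {compact-open, X -> Z}) (mem_set H).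

Lemma mkCK (X Z : topologicalType) (F : X -> Z) (H : continuous F) : Cfun (mkC H) = F.
Proof. by []. Qed.
Lemma phi0_cont (G Y X : topologicalType) (mul : G -> G -> G) (inv : G -> G)
    (D : G -> set Y) (th : G -> Y -> Y) (g : G) (f : Cmap X Y) :
  continuous (fun x => \pi_(env_space mul inv D th) (g, Cfun f x)).
Proof.
move=> x.
have c1 : {for x, continuous (fun x => (g, Cfun f x))}.
  by apply: cvg_pair; [exact: cvg_cst | exact: Cfun_cont].
have H := continuous_comp c1 (@pi_continuous _ _ (g, Cfun f x)).
exact: H.
Qed.

Definition phi0 (G Y X : topologicalType) (mul : G -> G -> G) (inv : G -> G)
    (D : G -> set Y) (th : G -> Y -> Y) (p : G * Cmap X Y) :
    Cmap X (env_space mul inv D th) :=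
  mkC (@phi0_cont G Y X mul inv D th p.1 p.2).

Definition Rh (G Y X : topologicalType) (mul : G -> G -> G) (inv : G -> G)
    (D : G -> set Y) (th : G -> Y -> Y) :=
  env_R mul inv (hat_dom X D) (hat_act X th).
Arguments Rh {G Y} X mul inv D th.

Lemma phi0_wd (G Y X : topologicalType) (mul : G -> G -> G) (inv : G -> G)
    (D : G -> set Y) (th : G -> Y -> Y) (p q : G * Cmap X Y) :
  env_eq (Rh X mul inv D th) p q -> phi0 mul inv D th p = phi0 mul inv D th q.
Proof.
move/asboolP; elim; clear p q.
- move=> [g f] [h f'] [/= H1 H2]; apply: Cfun_inj; rewrite !mkCK /=.
  apply: funext => x; apply/(eqmodP (env_equiv (Rb mul inv D th))).
  apply: Rb_env_eq; split => /=.
  exact: (H1 x).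
  by rewrite -H2.
- by [].
- by move=> p q _ ->.
- by move=> p q r _ -> _ ->.
Qed.
Definition phi (G Y X : topologicalType) (mul : G -> G -> G) (inv : G -> G)
    (D : G -> set Y) (th : G -> Y -> Y) (q : hat_env_space X mul inv D th) :
    Cmap X (env_space mul inv D th) :=
  phi0 mul inv D th (repr q).
Arguments phi {G Y} X mul inv D th q.

Lemma phi_pi (G Y X : topologicalType) (mul : G -> G -> G) (inv : G -> G)
    (D : G -> set Y) (th : G -> Y -> Y) (p : G * Cmap X Y) :
  phi X mul inv D th (\pi_(hat_env_space X mul inv D th) p) = phi0 mul inv D th p.
Proof.
apply: phi0_wd; apply/(eqmodP (env_equiv (Rh X mul inv D th))).
by rewrite reprK.
Qed.

Lemma phi0_inj (G Y X : topologicalType) (mul : G -> G -> G) inv one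
    (D : G -> set Y) (th : G -> Y -> Y) :
  topological_group mul inv one ->
  topological_partial_action mul inv one D th ->
  forall p q : G * Cmap X Y, phi0 mul inv D th p = phi0 mul inv D th q ->
  \pi_(hat_env_space X mul inv D th) p = \pi_(hat_env_space X mul inv D th) q.
Proof.
move=> hG hP [g f] [h f'] /(congr1 (@Cfun _ _)); rewrite !mkCK /= => E.
have R x : Rb mul inv D th (g, Cfun f x) (h, Cfun f' x).
  by apply/(pi_eqP hG hP); exact: (congr1 (fun F => F x) E).
apply/(eqmodP (env_equiv (Rh X mul inv D th))); apply: Rb_env_eq; split => /=.
- by move=> x; have [] := R x.
- by apply: funext => x; have [] := R x.
Qed.
Lemma Cmap_open_sub (X Z : topologicalType) (K : set X) (O : set Z) :
  compact K -> open O ->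
  open [set f : Cmap X Z | forall x, K x -> O (Cfun f x)].
Proof.
move=> cK oO.
exists [set F : {compact-open, X -> Z} | F @` K `<=` O].
  exact: compact_open_open.
rewrite eqEsubset; split => f /=.
- by move=> H x Kx; apply: H; exists x.
- by move=> H _ [x Kx <-]; apply: H.
Qed.

Lemma phi0_continuous (G Y X : topologicalType) (mul : G -> G -> G) (inv : G -> G)
    (D : G -> set Y) (th : G -> Y -> Y) :
  continuous (phi0 (X := X) mul inv D th).
Proof.
apply: (@continuous_comp_initial _ _ _ set_val).
move=> [g0 f0]; apply/compact_open_cvgP => K O cK oO sub.
have oW : open (\pi_(env_space mul inv D th) @^-1` O) by exact: oO.
have [V0 [Oc [nV oOc KOc VW]]] := tube cK oW (@Cfun_cont _ _ f0)
   (fun x Kx => sub _ (ex_intro2 _ _ x Kx erefl)).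
exists (V0, [set f : Cmap X Y | forall x, K x -> Oc (Cfun f x)]).
  split => //; apply: open_nbhs_nbhs; split; first exact: Cmap_open_sub.
  by move=> x Kx; exact: KOc.
case=> g f /= [Vg Bf] _ [x Kx <-].
exact: (VW g (Cfun f x) Vg (Bf x Kx)).
Qed.
Definition jinv (G Y : topologicalType) (mul : G -> G -> G) (inv : G -> G)
    (D : G -> set Y) (th : G -> Y -> Y) (g : G) (d : Y) (z : env_space mul inv D th) : Y :=
  match pselect (exists y, \pi_(env_space mul inv D th) (g, y) = z) with
  | left e => proj1_sig (cid e)
  | right _ => d
  end.

Lemma jinv_spec (G Y : topologicalType) (mul : G -> G -> G) (inv : G -> G)
    (D : G -> set Y) (th : G -> Y -> Y) (g : G) (d : Y) (z : env_space mul inv D th) :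
  (exists y, \pi_(env_space mul inv D th) (g, y) = z) ->
  \pi_(env_space mul inv D th) (g, jinv g d z) = z.
Proof.
move=> ex; rewrite /jinv; case: pselect => [e|//].
exact: (proj2_sig (cid e)).
Qed.

Lemma jinvK (G Y : topologicalType) (mul : G -> G -> G) inv one
    (D : G -> set Y) (th : G -> Y -> Y) :
  topological_group mul inv one ->
  topological_partial_action mul inv one D th ->
  forall g d y, jinv (mul := mul) (inv := inv) (D := D) (th := th) g d
     (\pi_(env_space mul inv D th) (g, y)) = y.
Proof.
move=> hG hP g d y; apply: (j_inj hG hP); apply: jinv_spec; by exists y.
Qed.
Lemma phi_open (G Y X : topologicalType) (mul : G -> G -> G) inv one
    (D : G -> set Y) (th : G -> Y -> Y) :
  topological_group mul inv one ->
  nice_partial_action mul inv one D th ->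
  compact [set: X] ->
  forall A : set (hat_env_space X mul inv D th), open A ->
  open (phi X mul inv D th @` A).
Proof.
move=> hG hN cX A oA.
have [hP _ _] := hN.
pose piY := \pi_(env_space mul inv D th).
pose piQ := \pi_(hat_env_space X mul inv D th).
rewrite openE => _ [a Aa <-].
rewrite /interior /phi.
have ea : piQ (repr a) = a by rewrite /piQ reprK.
move: (repr a) ea => [g f] ea.
pose B := [set f' : Cmap X Y | A (piQ (g, f'))].
have oB : open B.
  have oA' : open (piQ @^-1` A) by exact: oA.
  exact: ((continuousP _).1 (@pair_cst_cont G (Cmap X Y) g) _ oA').
have Bf : B f by rewrite /B /= ea.
case: oB => O0 oO0 eB.
pose Psi (F' : Cmap X (env_space mul inv D th)) : {compact-open, X -> Y} :=
  fun x => jinv g (Cfun f x) (Cfun F' x).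
have PsiF0 : Psi (phi0 mul inv D th (g, f)) = Cfun f.
  by apply: funext => x; rewrite /Psi mkCK /= (jinvK hG hP).
have N1 : nbhs (phi0 mul inv D th (g, f))
    [set F' | forall x, [set: X] x -> ((fun y => piY (g, y)) @` [set: Y]) (Cfun F' x)].
  apply: open_nbhs_nbhs; split.
    by apply: Cmap_open_sub => //; apply: (j_open hG hN); exact: openT.
  by move=> x _; exists (Cfun f x).
have N2 : nbhs (phi0 mul inv D th (g, f)) [set F' | O0 (Psi F')].
  have cPsi : Psi @ nbhs (phi0 mul inv D th (g, f)) --> (Cfun f : {compact-open, X -> Y}).
    apply/compact_open_cvgP => K O cK oO sub.
    have oM := Cmap_open_sub cK (j_open (g0 := g) hG hN oO).
    apply: (filterS _ (open_nbhs_nbhs (conj oM _))).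
      move=> F' HF' _ [x Kx <-].
      have [y0 Oo eo] := HF' x Kx.
      by rewrite /Psi -eo (jinvK hG hP).
    move=> x Kx; exists (Cfun f x); first by apply: sub; exists x.
    by rewrite mkCK.
  apply: cPsi; apply: open_nbhs_nbhs; split => //.
  have : B f by [].
  by rewrite -eB.
apply: filterS (filterI N1 N2) => F' [H1 H2].
have cPF : continuous (Psi F').
  apply/continuousP => U oU.
  have -> : Psi F' @^-1` U = Cfun F' @^-1` ((fun y => piY (g, y)) @` U).
    rewrite eqEsubset; split => x /=.
    - move=> Ux; exists (Psi F' x) => //.
      rewrite /piY /Psi jinv_spec //.
      by have [y _ ey] := H1 x I; exists y.
    - by case=> y Uy ey; rewrite /Psi -ey /piY (jinvK hG hP).
  exact: ((continuousP _).1 (@Cfun_cont _ _ F') _ (j_open (g0 := g) hG hN oU)).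
pose f' := mkC cPF.
have Bf' : B f' by rewrite -eB.
exists (piQ (g, f')); first exact: Bf'.
apply: etrans (phi_pi (X := X) mul inv D th (g, f')) _.
apply: Cfun_inj; rewrite !mkCK; apply: funext => x /=.
rewrite /Psi jinv_spec //.
by have [y _ ey] := H1 x I; exists y.
Qed.
Theorem theorem3p7 (G Y X : topologicalType)
    (mul : G -> G -> G) (inv : G -> G) (one : G)
    (D : G -> set Y) (th : G -> Y -> Y) :
  topological_group mul inv one ->
  hausdorff_space G ->
  nice_partial_action mul inv one D th ->
  compact [set: X] ->
  exists phi : hat_env_space X mul inv D th ->
               Cmap X (env_space mul inv D th),
    [/\ injective phi,
        continuous phi,
        open (range phi) &
        (forall A, open A -> open (phi @` A))].
Proof.
move=> hG _ hN cX.
have [hP _ _] := hN.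
exists (phi X mul inv D th); split.
- move=> a b E; have := phi0_inj hG hP E.
  by rewrite !reprK.
- apply/quotient_continuous.
  have -> : phi X mul inv D th \o \pi_(hat_env_space X mul inv D th) = phi0 mul inv D th.
    by apply: funext => p /=; exact: phi_pi.
  exact: phi0_continuous.
- exact: (phi_open hG hN cX openT).
- by move=> A oA; exact: (phi_open hG hN cX oA).
Qed.
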